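(* Let $q,n,h,t$ be positive integers with $h\le n$, and suppose $t+1$ divides $q$. For $j\in\{0,1,\dots,t\}$ let $$\mathcal C_q^{(j)}(n;t)=\Big\{\mathbf x\in[q]^n:\ \sum_{i=1}^n x_i\equiv j\pmod{t+1}\Big\}.$$ Then for every $j\in\{0,1,\dots,t\}$, $\mathcal C_q^{(j)}(n;t)$ is an optimal $(\cdot,h,t)$-AED code in $[q]^n$ (i.e., it is $(\cdot,h,t)$-AED and has the largest cardinality among all $(\cdot,h,t)$-AED codes in $[q]^n$), and $|\mathcal C_q^{(j)}(n;t)|=\frac{q^n}{t+1}$.
   Context: $[q]=\{0,1,\dots,q-1\}$. Channel over $[q]$ with $(\cdot,h,t)$-asymmetric errors: an input $\mathbf x\in[q]^n$ can produce any output $\mathbf y\in[q]^n$ satisfying $y_i\ge x_i$ for all $i$, $\sum_{i=1}^n\mathbb 1_{\{y_i\ne x_i\}}\le h$, and $\sum_{i=1}^n(y_i-x_i)\le t$ (no separate bound on the amplitude $y_i-x_i$). $\mathrm{Out}(\mathbf x)$ denotes the set of all such outputs. A code $\mathcal C\subseteq[q]^n$ is $(\cdot,h,t)$-AED if for all $\mathbf x\in\mathcal C$ and $\mathbf y\in\mathrm{Out}(\mathbf x)$ with $\mathbf y\ne\mathbf x$, we have $\mathbf y\notin\mathcal C$. *)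

(* Defs.v *)
From mathcomp Require Import all_boot.
Set Implicit Arguments. Unset Strict Implicit. Unset Printing Implicit Defensive.

Definition word (q n : nat) := {ffun 'I_n -> 'I_q}.

Definition is_out (q n h t : nat) (x y : word q n) : bool :=
  [forall i, x i <= y i] &&
  (#|[set i | y i != x i]| <= h) &&
  (\sum_(i < n) (y i - x i) <= t).

Definition is_AED (q n h t : nat) (C : {set word q n}) : Prop :=
  forall x y : word q n, x \in C -> is_out h t x y -> y != x -> y \notin C.

Definition Cqj (q n t j : nat) : {set word q n} :=
  [set x : word q n | \sum_(i < n) (x i : nat) == j %[mod t.+1]].

(* Main.v *)
Require Import Defs.
From mathcomp Require Import all_boot zify.

Lemma base_lt (q t x0 r : nat) : t.+1 %| q -> x0 < q -> r < t.+1 ->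
  x0 %/ t.+1 * t.+1 + r < q.
Proof.
move=> /dvdnP [k ->] hx hr.
have : x0 %/ t.+1 < k by rewrite ltn_divLR.
nia.
Qed.

Lemma aed_le q n h t j (hn : 0 < n) (hh : 0 < h) (hdiv : t.+1 %| q)
  (C : {set word q n}) : is_AED h t C -> #|C| <= #|Cqj q n t j|.
Proof.
move=> hC.
pose i0 := Ordinal hn.
pose S' (x : word q n) := \sum_(i | i != i0) (x i : nat).
pose base (x : word q n) := (x i0 : nat) %/ t.+1 * t.+1.
pose r (x : word q n) := (j + t * (S' x + base x)) %% t.+1.
pose g (x : word q n) : word q n :=
  [ffun i => if i == i0 then insubd (x i0) (base x + r x) else x i].
have hv x : (g x i0 : nat) = base x + r x.
  by rewrite ffunE eqxx val_insubd base_lt // ?ltn_mod.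
have hoth x i : i != i0 -> g x i = x i by rewrite ffunE => /negbTE ->.
have hS x : S' (g x) = S' x by apply: eq_bigr => i /hoth ->.
have hg x : g x \in Cqj q n t j.
  rewrite inE (bigD1 i0) //= -/(S' (g x)) hS hv.
  rewrite /r; set a := base x; set s := S' x.
  rewrite addnAC modnDmr.
  have -> : a + s + (j + t * (s + a)) = (s + a) * t.+1 + j by lia.
  by rewrite modnMDl.
have hq z : (base z + r z) %/ t.+1 = (z i0 : nat) %/ t.+1.
  by rewrite /base divnMDl // (@divn_small (r z)) ?addn0 // /r ltn_mod.
have key x y : x \in C -> y \in C -> (forall i, i != i0 -> x i = y i) ->
    (x i0 : nat) %/ t.+1 = (y i0 : nat) %/ t.+1 -> x i0 <= y i0 -> x = y.
  move=> hx hy ho hqq hle.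
  apply/eqP; rewrite eq_sym; apply/negPn/negP => hne.
  suff hout : is_out h t x y by move: (hC x y hx hout hne); rewrite hy.
  rewrite /is_out; apply/andP; split; [apply/andP; split|].
  - apply/forallP => i; case: (eqVneq i i0) => [->|hi] //; by rewrite ho.
  - apply: leq_trans (subset_leq_card (_ : _ \subset [set i0])) _.
      apply/subsetP => i; rewrite !inE; apply: contraR => hi.
      by rewrite (ho i hi).
    by rewrite cards1.
  - rewrite (bigD1 i0) //= big1 ?addn0; last by move=> i hi; rewrite ho // subnn.
    have e1 := divn_eq (x i0) t.+1; have e2 := divn_eq (y i0) t.+1.
    have : (y i0 : nat) %% t.+1 < t.+1 by rewrite ltn_mod.
    move: e1 e2; rewrite hqq.
    move: ((y i0 : nat) %/ t.+1) ((y i0 : nat) %% t.+1) ((x i0 : nat) %% t.+1) => a b c.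
    move: (a * t.+1) (nat_of_ord (x i0)) (nat_of_ord (y i0)) => m u v; lia.
have ginj : {in C &, injective g}.
  move=> x y hx hy he.
  have ho i : i != i0 -> x i = y i.
    by move=> hi; rewrite -(hoth x i hi) -(hoth y i hi) he.
  have hqq : (x i0 : nat) %/ t.+1 = (y i0 : nat) %/ t.+1.
    by rewrite -(hq x) -(hq y) -!hv he.
  case: (leqP (x i0) (y i0)) => hl; first exact: key.
  apply/esym/key => //; last exact: ltnW.
  by move=> i hi; rewrite ho.
rewrite -(card_in_imset ginj); apply: subset_leq_card.
by apply/subsetP => _ /imsetP [x _ ->].
Qed.

Lemma aed_Cqj q n h t j : is_AED h t (Cqj q n t j).
Proof.
move=> x y; rewrite !inE => hx /andP[/andP[/forallP hle _] hs] hne.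
have hsum: \sum_i (y i:nat) = \sum_i (x i : nat) + \sum_i (y i - x i).
  by rewrite -big_split /=; apply eq_bigr => i _; rewrite subnKC.
have hd: 0 < \sum_i (y i - x i).
  case: (pickP (fun i => y i != x i)) => [i hi | h0]; last first.
    by move/eqP: hne; case; apply/ffunP => i; move: (h0 i) => /negbFE/eqP.
  rewrite (bigD1 i) //=; apply: ltn_addr; rewrite subn_gt0 ltn_neqAle eq_sym hi.
  exact: hle.
rewrite hsum; apply/negP => H; move: hx => /eqP hx.
rewrite -hx -{2}(addn0 (\sum_i (x i : nat))) eqn_modDl mod0n modn_small in H.
  by move/eqP: H hd => ->.
by rewrite ltnS.
Qed.

Theorem theorem4 (q n h t : nat) (hq : 0 < q) (hn : 0 < n) (hh : 0 < h)
    (ht : 0 < t) (hhn : h <= n) (hdiv : t.+1 %| q) :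
  forall j : nat, j <= t ->
    [/\ is_AED h t (Cqj q n t j),
        (forall C : {set word q n}, is_AED h t C -> #|C| <= #|Cqj q n t j|)
      & #|Cqj q n t j| * t.+1 = q ^ n].
Proof.
move=> j hj.
have heq k : #|Cqj q n t k| = #|Cqj q n t 0|.
  by apply/eqP; rewrite eqn_leq !(@aed_le q n h t) //; apply: aed_Cqj.
split; first exact: (@aed_Cqj q n h t j).
  by move=> C hC; exact: (@aed_le q n h t j hn hh hdiv C hC).
have hf (x : word q n) : (\sum_(i < n) (x i : nat)) %% t.+1 < t.+1 by rewrite ltn_mod.
have : #|word q n| = \sum_(k < t.+1) #|Cqj q n t k|.
  rewrite -sum1_card (partition_big (fun x => Ordinal (hf x)) xpredT) //=.
  apply: eq_bigr => k _; rewrite -sum1_card; apply: eq_bigl => x.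
  by rewrite inE (modn_small (ltn_ord k)) -val_eqE.
rewrite card_ffun !card_ord => ->.
under eq_bigr do rewrite heq.
rewrite sum_nat_const card_ord heq mulnC.
by [].
Qed.
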